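(* Let $\mathbb{V}_0$ be a finite set of nodes with an optimal TSP route $\sigma_0$, and let $Z_1,\dots,Z_k$ be additional distinct nodes not in $\mathbb{V}_0$, with $\omega$ a symmetric weight function on pairs of distinct nodes of $\mathbb{V}_0\cup\{Z_1,\dots,Z_k\}$. For $i=1,\dots,k$ let $\mathbb{V}_i=\mathbb{V}_{i-1}\cup\{Z_i\}$, let $P_i,Q_i$ be neighbours on $\sigma_{i-1}$, and let $\sigma_i$ be obtained from $\sigma_{i-1}$ by inserting $Z_i$ between $P_i$ and $Q_i$. Suppose that for every $i$ there is no unordered pair $\{A,B\}$ of distinct nodes of $\mathbb{V}_{i-1}$ (which includes the previously added nodes $Z_1,\dots,Z_{i-1}$) with $\{A,B\}\neq\{P_i,Q_i\}$ such that $\omega(A,Z_i)+\omega(B,Z_i)-\omega(A,B)\le\omega(P_i,Z_i)+\omega(Q_i,Z_i)-\omega(P_i,Q_i)$. Then $\sigma_k$ is an optimal TSP route over $\mathbb{V}_k=\mathbb{V}_0\cup\{Z_1,\dots,Z_k\}$.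
   Context: For a set of nodes with weights $\omega$, a route is a cyclic ordering (permutation) $\sigma=(\sigma_1,\dots,\sigma_n)$ of all nodes, with cost $c(\sigma)=\omega(\sigma_n,\sigma_1)+\sum_{i=1}^{n-1}\omega(\sigma_i,\sigma_{i+1})$; a route is optimal if it minimizes this cost. Two nodes are neighbours on $\sigma$ if they are consecutive in $\sigma$ or are its first and last element. *)

(* Defs.v *)
From mathcomp Require Import all_boot all_order all_algebra.
Set Implicit Arguments. Unset Strict Implicit. Unset Printing Implicit Defensive.
Import Order.TTheory GRing.Theory Num.Theory.
Local Open Scope ring_scope.

Section TSP.
Variables (T : eqType) (R : realDomainType) (w : T -> T -> R).

(* c(sigma) = w(sigma_n, sigma_1) + sum_{i<n} w(sigma_i, sigma_{i+1}):
   sum over the cyclically consecutive pairs (sigma_1,sigma_2), ...,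
   (sigma_{n-1},sigma_n), (sigma_n,sigma_1). *)
Definition cost (s : seq T) : R :=
  match s with
  | [::] => 0
  | x :: s' => \sum_(p <- zip (x :: s') (rcons s' x)) w p.1 p.2
  end.

(* sigma is a route over the node set V (a duplicate-free list of nodes):
   a permutation of all nodes of V. *)
Definition route (V s : seq T) : Prop := perm_eq s V.

Definition optimal (V s : seq T) : Prop :=
  route V s /\ forall t, route V t -> cost s <= cost t.

(* A and B are neighbours on sigma: consecutive (0-based positions j, j+1)
   or the last and first element. *)
Definition neighbours (s : seq T) (A B : T) : Prop :=
  exists2 j, (j < size s)%N &
    let x := nth A s j in let y := nth A s (j.+1 %% size s) in
    (x = A /\ y = B) \/ (x = B /\ y = A).

(* s' is obtained from s by inserting Z between the neighbours P and Q:
   for a position j with {s_j, s_{j+1 mod n}} = {P, Q}, Z is put right after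
   position j (so between s_j and its cyclic successor). *)
Definition insert_between (s : seq T) (P Q Z : T) (s' : seq T) : Prop :=
  exists2 j, (j < size s)%N &
    let x := nth P s j in let y := nth P s (j.+1 %% size s) in
    ((x = P /\ y = Q) \/ (x = Q /\ y = P)) /\
    s' = take j.+1 s ++ Z :: drop j.+1 s.

End TSP.

(* Main.v *)
Require Import Defs.
From mathcomp Require Import all_boot all_order all_algebra.
From mathcomp Require Import ring lra.
Import Order.TTheory GRing.Theory Num.Theory.
Local Open Scope ring_scope.

Section H.
Variables (T : eqType) (R : realDomainType) (w : T -> T -> R).

Fixpoint pcost (x : T) (s : seq T) : R :=
  if s is y :: s' then w x y + pcost y s' else 0.

Lemma sum_zip x s z :
  \sum_(p <- zip (x :: s) (rcons s z)) w p.1 p.2 = pcost x s + w (last x s) z.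
Proof.
elim: s x => [|y s IH] x /=; first by rewrite big_seq1 add0r.
by rewrite big_cons IH /= addrA.
Qed.

Lemma cost_cons x s : cost w (x :: s) = pcost x s + w (last x s) x.
Proof. by rewrite /cost sum_zip. Qed.

Lemma pcost_rcons x s z : pcost x (rcons s z) = pcost x s + w (last x s) z.
Proof.
elim: s x => [|y s IH] x /=; first by rewrite addr0 add0r.
by rewrite IH addrA.
Qed.

Lemma cost_rot1 s : cost w (rot 1 s) = cost w s.
Proof.
case: s => [|x s] //; rewrite rot1_cons.
case: s => [|y s] //.
rewrite rcons_cons !cost_cons /= pcost_rcons last_rcons.
ring.
Qed.

Lemma cost_rot n s : cost w (rot n s) = cost w s.
Proof.
elim: n => [|n IH]; first by rewrite rot0.
case: (leqP n.+1 (size s)) => H.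
  by rewrite -add1n rotD // cost_rot1 IH.
by rewrite rot_oversize // ltnW.
Qed.

Lemma cost_ins Z a u :
  cost w (Z :: a :: u) = cost w (a :: u) + w Z a + w (last a u) Z - w (last a u) a.
Proof. rewrite !cost_cons /=; ring. Qed.

Lemma cost_insert s j Z d : (j < size s)%N ->
  exists x y, x = nth d s j /\ y = nth d s (j.+1 %% size s) /\
  cost w (take j.+1 s ++ Z :: drop j.+1 s) = cost w s + w Z y + w x Z - w x y.
Proof.
move=> hj.
set p := take j.+1 s; set q := drop j.+1 s.
have sp : size p = j.+1 by rewrite size_takel.
have es : s = p ++ q by rewrite cat_take_drop.
rewrite -(cost_rot (size p) (p ++ _)) rot_size_cat.
rewrite [in cost w s]es -(cost_rot (size p) (p ++ q)) rot_size_cat.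
have hx : nth d s j = last d p.
  by rewrite es nth_cat sp ltnSn -nth_last sp.
case: q es => [|y q] es.
- case: p sp hx es => [|a p] // sp hx es.
  exists (last a p), a; split; first by rewrite hx.
  split; last by rewrite cost_ins.
  by rewrite es cats0 sp modnn.
- case: p sp hx es => [|a p] // sp hx es.
  exists (last a p), y; split; first by rewrite hx.
  split.
    rewrite es size_cat sp modn_small; last by rewrite /= addnS ltnS leq_addr.
    by rewrite nth_cat sp ltnn subnn.
  by rewrite cat_cons cost_ins last_cat.
Qed.
End H.


Theorem corollary1 (T : eqType) (R : realDomainType) (w : T -> T -> R)
    (V0 : seq T) (k : nat) (Z P Q : nat -> T) (sigma : nat -> seq T) :
  let V := fun i : nat => V0 ++ map Z (iota 1 i) in
  uniq (V k) ->
  (forall x y, x \in V k -> y \in V k -> x != y -> w x y = w y x) ->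
  optimal w V0 (sigma 0%N) ->
  (forall i, (1 <= i <= k)%N -> neighbours (sigma i.-1) (P i) (Q i)) ->
  (forall i, (1 <= i <= k)%N ->
     insert_between (sigma i.-1) (P i) (Q i) (Z i) (sigma i)) ->
  (forall i, (1 <= i <= k)%N ->
     forall A B, A \in V i.-1 -> B \in V i.-1 -> A != B ->
       ~ ((A = P i /\ B = Q i) \/ (A = Q i /\ B = P i)) ->
       ~ (w A (Z i) + w B (Z i) - w A B <=
          w (P i) (Z i) + w (Q i) (Z i) - w (P i) (Q i))) ->
  optimal w (V k) (sigma k).
Proof.
move=> V huniq hsym hopt hnb hins hmin.
have Vi : forall i, (i <= k)%N -> V k = V i ++ map Z (iota i.+1 (k - i)).
  move=> i hi; rewrite /V; have {1}->: k = (i + (k - i))%N by rewrite subnKC.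
  by rewrite iotaD map_cat catA add1n.
have VS : forall i, V i.+1 = rcons (V i) (Z i.+1).
  move=> i; rewrite /V; have ->: iota 1 i.+1 = iota 1 (i + 1) by rewrite addn1.
  by rewrite iotaD map_cat /= catA cats1 add1n.
have memk : forall i x, (i <= k)%N -> x \in V i -> x \in V k.
  by move=> i x hi hx; rewrite (Vi i hi) mem_cat hx.
have ZnotV : forall i, (i < k)%N -> Z i.+1 \notin V i.
  move=> i hi; have := huniq; rewrite (Vi _ hi) cat_uniq => /andP[u _].
  by move: u; rewrite VS rcons_uniq => /andP[].
have ZinVk : forall i, (i < k)%N -> Z i.+1 \in V k.
  by move=> i hi; apply: (memk i.+1) => //; rewrite VS mem_rcons mem_head.
suff : forall i, (i <= k)%N -> optimal w (V i) (sigma i) by apply.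
elim=> [|i IH] hi; first by rewrite /V /= cats0.
have hi' : (i <= k)%N by apply: ltnW.
case: (IH hi') => rt opt.
have h1 : (1 <= i.+1 <= k)%N by [].
move: (hins _ h1) (hmin _ h1) => /=.
set Zi := Z i.+1; set Pi := P i.+1; set Qi := Q i.+1.
case=> j hj [hxy ->] hm.
have [x [y [ex [ey ec]]]] := @cost_insert _ _ w _ _ Zi Pi hj.
have sz : (0 < size (sigma i))%N by apply: leq_ltn_trans hj.
have inVi : forall c, c \in sigma i -> c \in V i by move=> c; rewrite (perm_mem rt).
have xV : x \in V i by rewrite ex; apply/inVi/mem_nth.
have yV : y \in V i by rewrite ey; apply/inVi/mem_nth; rewrite ltn_pmod.
have ZV : Zi \notin V i by apply: ZnotV.
have wZ : forall a, a \in V i -> w Zi a = w a Zi.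
  move=> a ha; apply: hsym; [exact: ZinVk | exact: memk ha |].
  by apply/eqP => e; move: ZV; rewrite e ha.
have wsym : forall a b, a \in V i -> b \in V i -> w a b = w b a.
  move=> a b ha hb; case: (eqVneq a b) => [->|ne] //.
  by apply: hsym => //; apply: memk ha || apply: memk hb.
pose ins A B := w A Zi + w B Zi - w A B.
have insE : forall A B, A \in V i -> B \in V i ->
    (A = Pi /\ B = Qi) \/ (A = Qi /\ B = Pi) -> ins A B = ins Pi Qi.
  move=> A B hA hB [[-> ->]|[e1 e2]] //.
  rewrite /ins -e1 -e2 (wsym A B) //; ring.
have PQV : Pi \in V i /\ Qi \in V i.
  by case: hxy; rewrite -ex -ey => -[<- <-].
have cxy : cost w (take j.+1 (sigma i) ++ Zi :: drop j.+1 (sigma i))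
           = cost w (sigma i) + ins Pi Qi.
  rewrite ec -(insE x y) //; last by rewrite ex ey.
  rewrite /ins wZ //; ring.
split.
  apply: (perm_trans (y := Zi :: sigma i)).
    by rewrite -cat1s perm_catCA /= cat_take_drop.
  by rewrite VS perm_sym perm_rcons perm_cons perm_sym.
move=> t rtt.
have Zt : Zi \in t by rewrite (perm_mem rtt) VS mem_rcons mem_head.
have := perm_rot (index Zi t) t; rewrite rot_index // => pr.
have pu : perm_eq (drop (index Zi t).+1 t ++ take (index Zi t) t) (V i).
  by move: (perm_trans (etrans (pr t) (perm_refl t)) rtt); rewrite VS perm_sym perm_rcons perm_cons perm_sym.
rewrite -(cost_rot _ _ w (index Zi t) t) rot_index // cxy.
move: (drop _ _ ++ _) pu => u pu.
case: u pu => [|a u] pu.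
  by move: sz; rewrite (perm_size rt) -(perm_size pu).
have uVi : uniq (V i).
  by move: huniq; rewrite (Vi _ hi') cat_uniq => /andP[].
have uu : uniq (a :: u) by rewrite (perm_uniq pu).
have aV : a \in V i by rewrite -(perm_mem pu) mem_head.
have bV : last a u \in V i by rewrite -(perm_mem pu) mem_last.
rewrite cost_ins.
have -> : cost w (a :: u) + w Zi a + w (last a u) Zi - w (last a u) a
          = cost w (a :: u) + ins (last a u) a by rewrite /ins wZ //; ring.
apply: lerD; first exact: opt.
case: (eqVneq (last a u) a) => [eb|nb].
  have u0 : u = [::].
    case: u uu eb {pu bV} => [|c u] //= /andP[na _] eb.
    by move: na; rewrite -eb mem_last.
  subst u.
  have ss : size (sigma i) = 1%N by rewrite (perm_size rt) -(perm_size pu).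
  have j0 : j = 0%N by move: hj; rewrite ss ltnS leqn0 => /eqP.
  have sa : sigma i = [:: a].
    have m : forall c, c \in sigma i -> c == a.
      by move=> c; rewrite (perm_mem rt) -(perm_mem pu) inE.
    move: m ss; case: (sigma i) => [|c [|]] //= m _.
    by rewrite (eqP (m c (mem_head _ _))).
  rewrite -(insE x y) //; last by rewrite ex ey.
  move: ex ey; rewrite sa j0 /= => -> ->.
  by [].
case: (boolP ((last a u == Pi) && (a == Qi) || (last a u == Qi) && (a == Pi))) => hc.
  rewrite (insE (last a u) a) //.
  by case/orP: hc => /andP[/eqP -> /eqP ->]; [left|right].
have nd : ~ ((last a u = Pi /\ a = Qi) \/ (last a u = Qi /\ a = Pi)).
  by case => -[e1 e2]; move: hc; rewrite e1 e2 !eqxx ?orbT.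
have := hm (last a u) a bV aV nb nd.
move/negP; rewrite -ltNge => /ltW; exact.
Qed.
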